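(* For $a\in(0,1]$ let $C_a=\{(x,y)\in\mathbb{Z}^2: x\ge0,\ |y|\le ax\}$ and let $m\in\mathbb{R}$. Then the divisible sandpile $s_a=m\mathbf 1_{C_a}$ on $\mathbb{Z}^2$ stabilizes if $\frac{2ma}{1+a^2}\le1$. Moreover, the divisible sandpile $s_0(x,y)=x\,\mathbf 1_{\{x>0,\,y=0\}}$ on $\mathbb{Z}^2$ stabilizes.
   Context: $\mathbb{Z}^2$ has its nearest-neighbour graph structure, $\Delta u(x)=\sum_{y\sim x}(u(y)-u(x))$. $s$ stabilizes if there exists $f:\mathbb{Z}^2\to[0,\infty)$ with $s+\Delta f\le1$ pointwise. *)

(* Defs.v *)
From Stdlib Require Import Reals ZArith Lra Lia.
Open Scope R_scope.

Definition laplacian (u : Z -> Z -> R) (x y : Z) : R :=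
  (u (x + 1)%Z y - u x y) + (u (x - 1)%Z y - u x y)
  + (u x (y + 1)%Z - u x y) + (u x (y - 1)%Z - u x y).

Definition stabilizes (s : Z -> Z -> R) : Prop :=
  exists f : Z -> Z -> R,
    (forall x y, 0 <= f x y) /\
    (forall x y, s x y + laplacian f x y <= 1).

Definition s_cone (a m : R) (x y : Z) : R :=
  if Rle_dec 0 (IZR x) then
    if Rle_dec (Rabs (IZR y)) (a * IZR x) then m else 0
  else 0.

Definition s_ray (x y : Z) : R :=
  if (Z.ltb 0 x && Z.eqb y 0)%bool then IZR x else 0.

(* Main.v *)
Require Import Defs.
From Stdlib Require Import Reals ZArith Lra Lia.
Open Scope R_scope.

Open Scope R_scope.

Definition q (t : R) : R := Rmax 0 t * Rmax 0 t.

Ltac qcase := unfold q, Rmax in *;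
  repeat match goal with |- context [Rle_dec ?a ?b] => destruct (Rle_dec a b) end.

Lemma q_nonneg t : 0 <= q t.
Proof. qcase; nra. Qed.

Lemma q_pos t : 0 <= t -> q t = t * t.
Proof. intro; qcase; nra. Qed.

Lemma q_mono t s : t <= s -> q t <= q s.
Proof. intro; qcase; nra. Qed.

Lemma q_sd1 t A B : A = t + 1 -> B = t - 1 -> q A + q B - 2 * q t <= 2.
Proof. intros -> ->; qcase; nra. Qed.

Lemma q_sdge t d A B : 0 < d -> A = t + d -> B = t - d -> 0 <= q A + q B - 2 * q t.
Proof. intros Hd -> ->; qcase; nra. Qed.

Lemma q_sdeq t d A B : 0 < d -> d <= t -> A = t + d -> B = t - d ->
  q A + q B - 2 * q t = 2 * d * d.
Proof. intros Hd Ht -> ->; qcase; nra. Qed.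

Lemma abs_step (y : Z) : y <> 0%Z ->
  (Rabs (IZR (y + 1)) = Rabs (IZR y) + 1 /\ Rabs (IZR (y - 1)) = Rabs (IZR y) - 1) \/
  (Rabs (IZR (y + 1)) = Rabs (IZR y) - 1 /\ Rabs (IZR (y - 1)) = Rabs (IZR y) + 1).
Proof.
  intro H. rewrite plus_IZR, minus_IZR.
  destruct (Z_lt_le_dec 0 y) as [Hy|Hy].
  - left. assert (IZR y >= 1).
    { apply Rle_ge. apply IZR_le. lia. }
    rewrite !Rabs_right by lra. lra.
  - right. assert (IZR y <= IZR (-1)) by (apply IZR_le; lia).
    change (IZR (-1)) with (- IZR 1) in H0.
    rewrite !Rabs_left1 by lra. lra.
Qed.

Lemma abs0 : Rabs (IZR (0 + 1)) = 1 /\ Rabs (IZR (0 - 1)) = 1 /\ Rabs (IZR 0) = 0.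
Proof. rewrite plus_IZR, minus_IZR. replace (IZR 0 + 1) with 1 by (simpl; ring).
  replace (IZR 0 - 1) with (-1) by (simpl; ring). simpl.
  unfold Rabs; repeat split; destruct Rcase_abs; lra. Qed.

Definition fr (x y : Z) : R := q (IZR x - Rabs (IZR y)) / 4.

Definition fc (a : R) (x y : Z) : R :=
  q (IZR x + / a - Rabs (IZR y)) / 4 - q (a * IZR x + 1 - Rabs (IZR y)) / (4 * a).

Lemma ray_ok : stabilizes s_ray.
Proof.
  exists fr. split.
  - intros x y. unfold fr. pose proof (q_nonneg (IZR x - Rabs (IZR y))). lra.
  - intros x y. unfold laplacian, fr, s_ray.
    rewrite (plus_IZR x), (minus_IZR x).
    set (X := IZR x).
    destruct (Z.eq_dec y 0) as [->|Hy].
    + destruct abs0 as [E1 [E2 E3]]. rewrite E1, E2, E3.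
      pose proof (q_sd1 (X - 0) (X + 1 - 0) (X - 1 - 0) ltac:(ring) ltac:(ring)).
      destruct (Z.ltb_spec 0 x) as [Hx|Hx]; simpl.
      * assert (HX : 1 <= X) by (apply IZR_le; lia).
        rewrite (q_pos (X - 1 - 0)), (q_pos (X - 1)), (q_pos (X - 0)) in * by lra. nra.
      * pose proof (q_mono (X - 1) (X - 0) ltac:(lra)). lra.
    + assert (Hb : (Z.ltb 0 x && Z.eqb y 0)%bool = false).
      { destruct (Z.eqb_spec y 0); [contradiction|]. destruct (0 <? x)%Z; reflexivity. }
      rewrite Hb. set (v := Rabs (IZR y)).
      pose proof (q_sd1 (X - v) (X + 1 - v) (X - 1 - v) ltac:(ring) ltac:(ring)).
      destruct (abs_step y Hy) as [[E1 E2]|[E1 E2]]; rewrite E1, E2; fold v.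
      * pose proof (q_sd1 (X - v) (X - (v - 1)) (X - (v + 1)) ltac:(ring) ltac:(ring)). lra.
      * pose proof (q_sd1 (X - v) (X - (v - 1)) (X - (v + 1)) ltac:(ring) ltac:(ring)). lra.
Qed.

Lemma q_neg t : t <= 0 -> q t = 0.
Proof. intro; qcase; nra. Qed.

Lemma d4_nonneg a z : 0 < a -> 0 <= z -> 0 <= z / (4 * a).
Proof. intros. unfold Rdiv. apply Rmult_le_pos; auto. left. apply Rinv_0_lt_compat. lra. Qed.

Lemma d4_a a z : 0 < a -> z = 2 * a * a -> z / (4 * a) = a / 2.
Proof. intros ? ->. field. lra. Qed.

Lemma d4_1 a z : 0 < a -> z = 2 * 1 * 1 -> z / (4 * a) = / a / 2.
Proof. intros ? ->. field. lra. Qed.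

Lemma cone_ok a m : 0 < a -> a <= 1 -> 2 * m * a / (1 + a ^ 2) <= 1 ->
  stabilizes (s_cone a m).
Proof.
  intros Ha Ha1 Hm0.
  assert (H2 : 2 * m * a <= 1 + a ^ 2).
  { assert (E : 2 * m * a = (2 * m * a / (1 + a ^ 2)) * (1 + a ^ 2)) by (field; nra).
    rewrite E. nra. }
  assert (Hm : m <= a / 2 + / a / 2).
  { assert (E1 : m = (2 * m * a) * / a / 2) by (field; lra).
    assert (E2 : a / 2 + / a / 2 = (1 + a ^ 2) * / a / 2) by (field; lra).
    rewrite E1, E2. assert (0 < / a) by (apply Rinv_0_lt_compat; lra).
    unfold Rdiv. apply Rmult_le_compat_r; [lra|]. apply Rmult_le_compat_r; lra. }
  assert (Hia : 1 <= / a).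
  { rewrite <- Rinv_1. apply Rinv_le_contravar; lra. }
  assert (Haia : a * / a = 1) by (field; lra).
  exists (fc a). split.
  - intros x y. unfold fc. set (X := IZR x). set (v := Rabs (IZR y)).
    assert (Hv : 0 <= v) by apply Rabs_pos.
    destruct (Rle_dec (a * X + 1 - v) 0) as [Hu|Hu].
    + rewrite (q_neg _ Hu). pose proof (q_nonneg (X + / a - v)). unfold Rdiv. lra.
    + set (W := X + / a).
      assert (EU : a * X + 1 - v = a * W - v) by (unfold W; field; lra).
      rewrite EU in *. assert (HW : 0 < W) by nra.
      assert (HT : a * W - v <= W - v) by nra.
      rewrite (q_pos (W - v)), (q_pos (a * W - v)) by lra.
      assert (Hk : (a * W - v) * (a * W - v) <= a * ((W - v) * (W - v))).
      { assert (v * v <= a * W * W) by nra. nra. }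
      assert (E : (W - v) * (W - v) / 4 = a * ((W - v) * (W - v)) / (4 * a)) by (field; lra).
      rewrite E. unfold Rdiv. assert (0 < / (4 * a)) by (apply Rinv_0_lt_compat; lra).
      nra.
  - intros x y. unfold laplacian, fc, s_cone. rewrite (plus_IZR x), (minus_IZR x).
    set (X := IZR x).
    destruct (Z.eq_dec y 0) as [->|Hy].
    + destruct abs0 as [E1 [E2 E3]]. rewrite E1, E2, E3.
      pose proof (q_sd1 (X + / a - 0) (X + 1 + / a - 0) (X - 1 + / a - 0) ltac:(ring) ltac:(ring)) as PX.
      pose proof (d4_nonneg a _ Ha (q_sdge (a * X + 1 - 0) a (a * (X + 1) + 1 - 0) (a * (X - 1) + 1 - 0) Ha ltac:(ring) ltac:(ring))) as RX.
      destruct (Rle_dec 0 X) as [HX|HX].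
      * destruct (Rle_dec 0 (a * X)) as [_|HaX]; [|exfalso; nra].
        pose proof (d4_a a _ Ha (q_sdeq (a * X + 1 - 0) a (a * (X + 1) + 1 - 0) (a * (X - 1) + 1 - 0) Ha ltac:(nra) ltac:(ring) ltac:(ring))) as RXe.
        pose proof (q_sdeq (X + / a - 0) 1 (X + 1 + / a - 0) (X - 1 + / a - 0) Rlt_0_1 ltac:(lra) ltac:(ring) ltac:(ring)) as PXe.
        rewrite (q_pos (X + / a - 1)), (q_pos (X + / a - 0)), (q_pos (a * X + 1 - 1)), (q_pos (a * X + 1 - 0)) in * by nra.
        assert (K : ((X + / a - 1) * (X + / a - 1) / 4 - (a * X + 1 - 1) * (a * X + 1 - 1) / (4 * a)
                  - ((X + / a - 0) * (X + / a - 0) / 4 - (a * X + 1 - 0) * (a * X + 1 - 0) / (4 * a)))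
                 = (1 - / a) / 4) by (field; lra).
        lra.
      * assert (HX1 : X <= -1).
        { assert (x <= -1)%Z. { destruct (Z_le_gt_dec x (-1)); auto. exfalso. apply HX. apply IZR_le. lia. }
          apply IZR_le in H. exact H. }
        rewrite (q_neg (a * X + 1 - 1)) by nra.
        set (T := X + / a - 0) in *.
        destruct (Rle_dec (a * X + 1 - 0) 0) as [HU|HU].
        -- rewrite (q_neg _ HU) in *.
           pose proof (q_mono (X + / a - 1) T ltac:(unfold T; lra)). unfold Rdiv in *. lra.
        -- assert (HT : 0 < T) by (unfold T; nra).
           assert (HaT : a * T <= 1) by (unfold T; nra).
           assert (EU : q (a * X + 1 - 0) / (4 * a) = a * T * T / 4).
           { rewrite q_pos by lra. unfold T. field. lra. }
           assert (B : q (X + / a - 1) - T * T + a * T * T <= 1).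
           { destruct (Rle_dec 1 T).
             - rewrite q_pos by (unfold T in *; lra).
               replace (X + / a - 1) with (T - 1) by (unfold T; ring). nra.
             - rewrite q_neg by (unfold T in *; lra). nra. }
           fold T in PX. rewrite (q_pos T) in * by lra.
           assert (Z0 : 0 / (4 * a) = 0) by (field; lra).
           unfold Rdiv in *. lra.
    + set (v := Rabs (IZR y)).
      pose proof (q_sd1 (X + / a - v) (X + 1 + / a - v) (X - 1 + / a - v) ltac:(ring) ltac:(ring)) as PX.
      pose proof (d4_nonneg a _ Ha (q_sdge (a * X + 1 - v) a (a * (X + 1) + 1 - v) (a * (X - 1) + 1 - v) Ha ltac:(ring) ltac:(ring))) as RX.
      pose proof (q_sd1 (X + / a - v) (X + / a - (v - 1)) (X + / a - (v + 1)) ltac:(ring) ltac:(ring)) as PY.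
      pose proof (d4_nonneg a _ Ha (q_sdge (a * X + 1 - v) 1 (a * X + 1 - (v - 1)) (a * X + 1 - (v + 1)) Rlt_0_1 ltac:(ring) ltac:(ring))) as RY.
      destruct (abs_step y Hy) as [[E1 E2]|[E1 E2]]; rewrite E1, E2; fold v;
      (destruct (Rle_dec 0 X) as [HX|HX];
       [destruct (Rle_dec v (a * X)) as [Hc|Hc] |]);
      try (unfold Rdiv in *; lra);
      pose proof (d4_a a _ Ha (q_sdeq (a * X + 1 - v) a (a * (X + 1) + 1 - v) (a * (X - 1) + 1 - v) Ha ltac:(nra) ltac:(ring) ltac:(ring))) as RXe;
      pose proof (d4_1 a _ Ha (q_sdeq (a * X + 1 - v) 1 (a * X + 1 - (v - 1)) (a * X + 1 - (v + 1)) Rlt_0_1 ltac:(nra) ltac:(ring) ltac:(ring))) as RYe;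
      unfold Rdiv in *; lra.
Qed.

Theorem lemma6p4 :
  (forall a m : R, 0 < a -> a <= 1 ->
     2 * m * a / (1 + a ^ 2) <= 1 -> stabilizes (s_cone a m)) /\
  stabilizes s_ray.
Proof.
  split; [intros; apply cone_ok; auto | exact ray_ok].
Qed.
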